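(* In the $(3,2,2)$ scenario, the deterministic correlation $p(\vec x|\vec a)=\delta_{x_1,a_2\oplus a_3}\,\delta_{x_2,a_3\oplus a_1}\,\delta_{x_3,a_1\oplus a_2}$ cannot be realized by a process function; hence it is antinomic (not deterministically consistent), although its signalling graph is the complete directed graph on three vertices.
   Context: $(3,2,2)$ scenario: three parties with $a_k,x_k\in\{0,1\}$; $\oplus$ is addition mod 2. For finite sets $I_k,O_k$, $p(\vec i|\vec o)$ is a classical process if for all finite $A_k,X_k$ and all local interventions $p(x_k,o_k|a_k,i_k)$ the expression $\sum_{\vec i,\vec o}\prod_kp(x_k,o_k|a_k,i_k)p(\vec i|\vec o)$ is a valid conditional distribution over $\vec x$. A process function is $\omega:\vec O\to\vec I$ such that $\delta_{\vec i,\omega(\vec o)}$ is a classical process, equivalently such that for all $h=(h_k:I_k\to O_k)_k$ the map $\omega\circ h$ has a unique fixed point. A correlation is realized by $\omega$ if it equals $\sum_{\vec i,\vec o}\prod_kp(x_k,o_k|a_k,i_k)\delta_{\vec i,\omega(\vec o)}$ for some local interventions; it is deterministically consistent if it is of this form with $\delta_{\vec i,\omega(\vec o)}$ replaced by a convex combination of process functions, and antinomic otherwise. Signalling graph: edge $k\to l$ iff $f_l$ depends nontrivially on $a_k$. *)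

(* Defs.v *)
From HB Require Import structures.
From mathcomp Require Import all_boot all_order all_algebra.
From mathcomp Require Import reals.
Set Implicit Arguments. Unset Strict Implicit. Unset Printing Implicit Defensive.
Import Order.TTheory GRing.Theory Num.Theory.
Local Open Scope ring_scope.

Notation triple A B C := ((A * B) * C)%type.

(* A (3,2,2) correlation p(x|a), x, a in {0,1}^3, written p x a. *)
Definition corr (R : realType) := triple bool bool bool -> triple bool bool bool -> R.

Definition comp (v : triple bool bool bool) (k : 'I_3) : bool :=
  match val k with 0%N => v.1.1 | 1%N => v.1.2 | _ => v.2 end.

(* Local intervention p(x_k, o_k | a_k, i_k) with A_k = X_k = {0,1},
   written p a i x o : a conditional probability distribution. *)
Definition intervention (R : realType) (I O : finType)
  (p : bool -> I -> bool -> O -> R) : Prop :=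
  (forall a i x o, 0 <= p a i x o) /\
  (forall a i, \sum_(x : bool) \sum_(o : O) p a i x o = 1).

Definition process_function (I1 I2 I3 O1 O2 O3 : finType)
  (w : triple O1 O2 O3 -> triple I1 I2 I3) : Prop :=
  forall (h1 : I1 -> O1) (h2 : I2 -> O2) (h3 : I3 -> O3),
    exists! i : triple I1 I2 I3, w ((h1 i.1.1, h2 i.1.2), h3 i.2) = i.

(* p is obtained from the "process" q(i|o) (written q o i) by local interventions. *)
Definition realizes_with (R : realType) (I1 I2 I3 O1 O2 O3 : finType)
  (q : triple O1 O2 O3 -> triple I1 I2 I3 -> R) (p : corr R) : Prop :=
  exists (p1 : bool -> I1 -> bool -> O1 -> R) (p2 : bool -> I2 -> bool -> O2 -> R)
         (p3 : bool -> I3 -> bool -> O3 -> R),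
    [/\ intervention p1, intervention p2, intervention p3 &
      forall x a : triple bool bool bool,
        p x a = \sum_(i : triple I1 I2 I3) \sum_(o : triple O1 O2 O3)
                  p1 a.1.1 i.1.1 x.1.1 o.1.1 * p2 a.1.2 i.1.2 x.1.2 o.1.2
                  * p3 a.2 i.2 x.2 o.2 * q o i].

Definition realized_by (R : realType) (I1 I2 I3 O1 O2 O3 : finType)
  (w : triple O1 O2 O3 -> triple I1 I2 I3) (p : corr R) : Prop :=
  realizes_with (fun o i => (i == w o)%:R) p.

Definition det_consistent (R : realType) (p : corr R) : Prop :=
  exists (I1 I2 I3 O1 O2 O3 : finType) (n : nat) (lam : 'I_n -> R)
         (ws : 'I_n -> triple O1 O2 O3 -> triple I1 I2 I3),
    [/\ forall j, 0 <= lam j, \sum_(j < n) lam j = 1,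
        forall j, process_function (ws j) &
        realizes_with (fun o i => \sum_(j < n) lam j * (i == ws j o)%:R) p].

Definition antinomic (R : realType) (p : corr R) : Prop := ~ det_consistent p.

Definition det_corr (R : realType) (f : triple bool bool bool -> triple bool bool bool)
  : corr R := fun x a => (x == f a)%:R.

Definition signal_edge (f : triple bool bool bool -> triple bool bool bool)
  (k l : 'I_3) : Prop :=
  exists a a' : triple bool bool bool,
    (forall j, j != k -> comp a j = comp a' j) /\ comp (f a) l != comp (f a') l.

Definition f_xor (a : triple bool bool bool) : triple bool bool bool :=
  ((a.1.2 (+) a.2, a.2 (+) a.1.1), a.1.1 (+) a.1.2).

(* Main.v *)
Require Import Defs.
From mathcomp Require Import all_boot all_order all_algebra reals.
Set Implicit Arguments. Unset Strict Implicit. Unset Printing Implicit Defensive.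
Import Order.TTheory GRing.Theory Num.Theory.

Section Bi.
Variables I1 I2 I3 O1 O2 O3 : finType.
Variable w : triple O1 O2 O3 -> triple I1 I2 I3.
Hypothesis PF : process_function w.
Variable h3 : I3 -> O3.

Lemma ex_fp (o1 : O1) (o2 : O2) :
  exists i : triple I1 I2 I3, w ((o1, o2), h3 i.2) == i.
Proof. by have [i [Hi _]] := PF (fun _ => o1) (fun _ => o2) h3; exists i; apply/eqP. Qed.

Definition Phi o1 o2 := xchoose (ex_fp o1 o2).

Lemma PhiP o1 o2 : w ((o1, o2), h3 (Phi o1 o2).2) = Phi o1 o2.
Proof. exact/eqP/(xchooseP (ex_fp o1 o2)). Qed.

Lemma fpL (h1 : I1 -> O1) (h2 : I2 -> O2) i :
  w ((h1 i.1.1, h2 i.1.2), h3 i.2) = i -> i = Phi (h1 i.1.1) (h2 i.1.2).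
Proof.
move=> Hi.
have [k [_ U]] := PF (fun _ => h1 i.1.1) (fun _ => h2 i.1.2) h3.
have E2 := U (Phi (h1 i.1.1) (h2 i.1.2)) (PhiP _ _). exact: (etrans (esym (U i Hi)) E2).
Qed.

Lemma exfp (h1 : I1 -> O1) (h2 : I2 -> O2) :
  exists i, w ((h1 i.1.1, h2 i.1.2), h3 i.2) = i.
Proof. by have [i [Hi _]] := PF h1 h2 h3; exists i. Qed.

Lemma noself1 o1 o1' o2 : (Phi o1 o2).1.1 = (Phi o1' o2).1.1.
Proof.
have [//|/eqP Hne] := eqVneq (Phi o1 o2).1.1 (Phi o1' o2).1.1; exfalso.
pose h1 i1 := if i1 == (Phi o1 o2).1.1 then o1' else o1.
have [i Hi] := exfp h1 (fun _ => o2).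
have := fpL Hi; rewrite /h1; case: eqP => [E|NE] Ei.
  by apply: Hne; rewrite -E Ei.
by apply: NE; rewrite Ei.
Qed.

Lemma noself2 o1 o2 o2' : (Phi o1 o2).1.2 = (Phi o1 o2').1.2.
Proof.
have [//|/eqP Hne] := eqVneq (Phi o1 o2).1.2 (Phi o1 o2').1.2; exfalso.
pose h2 i2 := if i2 == (Phi o1 o2).1.2 then o2' else o2.
have [i Hi] := exfp (fun _ => o1) h2.
have := fpL Hi; rewrite /h2; case: eqP => [E|NE] Ei.
  by apply: Hne; rewrite -E Ei.
by apply: NE; rewrite Ei.
Qed.

Lemma flip0 o1 o1' o2 o2' :
  (Phi o1 o2).1.1 != (Phi o1 o2').1.1 -> (Phi o1 o2).1.2 != (Phi o1' o2).1.2 -> False.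
Proof.
move=> N1 N2.
pose h1 i1 := if i1 == (Phi o1 o2).1.1 then o1' else o1.
pose h2 i2 := if i2 == (Phi o1' o2).1.2 then o2' else o2.
have [i Hi] := exfp h1 h2.
have Ei := fpL Hi.
have E1 : i.1.1 = (Phi o1 (h2 i.1.2)).1.1 by rewrite {1}Ei (noself1 _ o1).
have E2 : i.1.2 = (Phi (h1 i.1.1) o2).1.2 by rewrite {1}Ei (noself2 _ _ o2).
move: E1 E2; rewrite /h1 /h2.
case: (eqVneq i.1.1 (Phi o1 o2).1.1) => A E1 E2.
  rewrite E2 eqxx in E1.
  by move: N1; rewrite -A E1 eqxx.
rewrite E2 (negbTE N2) in E1.
by rewrite E1 eqxx in A.
Qed.

Lemma flip p p' q q' r r' s s' :
  (Phi p q).1.1 != (Phi p' q').1.1 -> (Phi r s).1.2 != (Phi r' s').1.2 -> False.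
Proof.
rewrite (noself1 p r) (noself1 p' r) (noself2 r s q) (noself2 r' s' q).
exact: flip0.
Qed.

Variables (g1 : bool -> I1 -> O1) (g2 : bool -> I2 -> O2)
          (e1 : bool -> I1 -> bool) (e2 : bool -> I2 -> bool).

Lemma det_imp :
  (forall a1 a2 i, w ((g1 a1 i.1.1, g2 a2 i.1.2), h3 i.2) = i ->
     e1 a1 i.1.1 = a2 /\ e2 a2 i.1.2 = a1) -> False.
Proof.
move=> H.
have [i00 H00] := exfp (g1 false) (g2 false).
have [i01 H01] := exfp (g1 false) (g2 true).
have [i10 H10] := exfp (g1 true) (g2 false).
have [a00 b00] := H _ _ _ H00.
have [a01 b01] := H _ _ _ H01.
have [a10 b10] := H _ _ _ H10.
apply: (@flip (g1 false i00.1.1) (g1 false i01.1.1) (g2 false i00.1.2) (g2 true i01.1.2)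
              (g1 false i00.1.1) (g1 true i10.1.1) (g2 false i00.1.2) (g2 false i10.1.2)).
  rewrite -(fpL H00) -(fpL H01); apply/eqP => E.
  by move: a00; rewrite E a01.
rewrite -(fpL H00) -(fpL H10); apply/eqP => E.
by move: b00; rewrite E b10.
Qed.
End Bi.

Section RS.
Local Open Scope ring_scope.

Lemma ge0_not_gt0 (R : realType) (x : R) : 0 <= x -> (0 < x) = false -> x = 0.
Proof. by move=> H1 H2; apply/eqP; rewrite eq_le H1 andbT leNgt H2. Qed.

Lemma pos_exists (R : realType) (O : finType) (p : bool -> O -> R) :
  (forall x o, 0 <= p x o) -> \sum_(x : bool) \sum_(o : O) p x o = 1 ->
  exists xo : bool * O, 0 < p xo.1 xo.2.
Proof.
move=> H0 H1.
case: (pickP (fun xo : bool * O => 0 < p xo.1 xo.2)) => [xo Hxo|N]; first by exists xo.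
exfalso; move: H1; rewrite big1 => [|x _]; last first.
  by rewrite big1 // => o _; apply: ge0_not_gt0 (H0 x o) (N (x, o)).
by move/eqP; rewrite eq_sym oner_eq0.
Qed.

Lemma antinomic_xor (R : realType) : antinomic (det_corr R f_xor).
Proof.
move=> [I1 [I2 [I3 [O1 [O2 [O3 [n [lam [ws [Hl0 Hl1 HPF]]]]]]]]]].
move=> [p1 [p2 [p3 [[P1a P1b] [P2a P2b] [P3a P3b] Heq]]]].
have [j Hj] : exists j, 0 < lam j.
  case: (pickP (fun j => 0 < lam j)) => [j Hj|N]; first by exists j.
  exfalso; move: Hl1; rewrite big1 => [|k _]; last exact: ge0_not_gt0 (Hl0 k) (N k).
  by move/eqP; rewrite eq_sym oner_eq0.
have key : forall (a x : triple bool bool bool) i o,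
    0 < p1 a.1.1 i.1.1 x.1.1 o.1.1 -> 0 < p2 a.1.2 i.1.2 x.1.2 o.1.2 ->
    0 < p3 a.2 i.2 x.2 o.2 -> i = ws j o -> x = f_xor a.
  move=> a x i o H1 H2 H3 Ho.
  have [//|Hx] := eqVneq x (f_xor a); exfalso.
  have := Heq x a; rewrite /det_corr (negbTE Hx) /= => /esym E.
  have Hnn : forall (i : triple I1 I2 I3) (o : triple O1 O2 O3),
      0 <= p1 a.1.1 i.1.1 x.1.1 o.1.1 * p2 a.1.2 i.1.2 x.1.2 o.1.2 * p3 a.2 i.2 x.2 o.2 *
           (\sum_(j < n) lam j * (i == ws j o)%:R).
    move=> i' o'; rewrite !mulr_ge0 //; apply: sumr_ge0 => k _.
    by rewrite mulr_ge0.
  have E1 := @psumr_eq0P _ _ _ _ (fun i1 _ => sumr_ge0 _ (fun o1 _ => Hnn i1 o1)) E i isT.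
  have E2 := @psumr_eq0P _ _ _ _ (fun o1 _ => Hnn i o1) E1 o isT.
  have : 0 < \sum_(k < n) lam k * (i == ws k o)%:R.
    rewrite (bigD1 j) //= Ho eqxx mulr1.
    apply: lt_le_trans Hj _; rewrite lerDl; apply: sumr_ge0 => k _.
    by rewrite mulr_ge0.
  move=> HS.
  have : 0 < p1 a.1.1 i.1.1 x.1.1 o.1.1 * p2 a.1.2 i.1.2 x.1.2 o.1.2 * p3 a.2 i.2 x.2 o.2 *
           (\sum_(j < n) lam j * (i == ws j o)%:R) by rewrite !mulr_gt0.
  by rewrite E2 ltxx.
pose c1 a i := xchoose (pos_exists (P1a a i) (P1b a i)).
pose c2 a i := xchoose (pos_exists (P2a a i) (P2b a i)).
pose c3 a i := xchoose (pos_exists (P3a a i) (P3b a i)).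
apply: (@det_imp _ _ _ _ _ _ (ws j) (HPF j) (fun i => (c3 false i).2)
          (fun a i => (c1 a i).2) (fun a i => (c2 a i).2)
          (fun a i => (c1 a i).1) (fun a i => (c2 a i).1)).
move=> a1 a2 i Hi.
have := key ((a1, a2), false) (((c1 a1 i.1.1).1, (c2 a2 i.1.2).1), (c3 false i.2).1) i
  (((c1 a1 i.1.1).2, (c2 a2 i.1.2).2), (c3 false i.2).2).
move=> /(_ (xchooseP (pos_exists (P1a a1 i.1.1) (P1b a1 i.1.1)))
          (xchooseP (pos_exists (P2a a2 i.1.2) (P2b a2 i.1.2)))
          (xchooseP (pos_exists (P3a false i.2) (P3b false i.2))) (esym Hi)).
by rewrite /f_xor /= addbF => -[-> ->].
Qed.

Lemma signal_xor (k l : 'I_3) : signal_edge f_xor k l <-> k != l.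
Proof.
rewrite /signal_edge; split.
  move=> [[[a1 a2] a3] [[[b1 b2] b3] [H Hne]]].
  apply/negP => /eqP Ekl; subst l.
  have h0 := H (@Ordinal 3 0 isT); have h1 := H (@Ordinal 3 1 isT);
  have h2 := H (@Ordinal 3 2 isT).
  case: k H Hne h0 h1 h2 => [[|[|[|k]]] Hk] //= _ Hne h0 h1 h2.
  1-3: rewrite /Defs.comp /= in Hne h0 h1 h2;
    by move: Hne; rewrite ?(h0 isT) ?(h1 isT) ?(h2 isT) eqxx.
case: k => [[|[|[|k]]] Hk] //; case: l => [[|[|[|l]]] Hl] // Hkl.
all: first [ (exists ((true, false), false), ((false, false), false);
              split; [by case => [[|[|[|j]]] Hj] | by []])
           | (exists ((false, true), false), ((false, false), false);
              split; [by case => [[|[|[|j]]] Hj] | by []])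
           | (exists ((false, false), true), ((false, false), false);
              split; [by case => [[|[|[|j]]] Hj] | by []]) ].
Qed.

End RS.

Theorem mainTheorem8 (R : realType) :
  (forall (I1 I2 I3 O1 O2 O3 : finType) (w : triple O1 O2 O3 -> triple I1 I2 I3),
     process_function w -> ~ realized_by w (det_corr R f_xor)) /\
  antinomic (det_corr R f_xor) /\
  (forall k l : 'I_3, signal_edge f_xor k l <-> k != l).
Proof.
split; last by split; [exact: antinomic_xor | exact: signal_xor].
move=> I1 I2 I3 O1 O2 O3 w PF [p1 [p2 [p3 [H1 H2 H3 Heq]]]].
apply: (@antinomic_xor R).
exists I1, I2, I3, O1, O2, O3, 1%N, (fun _ => 1%R), (fun _ => w).
split => //; first by rewrite big_ord1.
exists p1, p2, p3; split => // x a; rewrite Heq.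
apply: eq_bigr => i _; apply: eq_bigr => o _.
by rewrite big_ord1 mul1r.
Qed.
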